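(* Let $\mathcal Z\subseteq[0,1]^d$ and suppose $y_1(\mathbf{x})=y_2(\mathbf{x})$ for all $\mathbf{x}\notin\mathcal Z$. Then for any admissible algorithm with budget $n$, $\mathbb{P}_2(\tau(\mathcal Z)>t)=\mathbb{P}_1(\tau(\mathcal Z)>t)$ for all $t$, where $\mathbb{P}_i$ denotes probability when the algorithm is run on Problem $i$.
   Context: Problem $i$ ($i=1,2$): objective $y_i:[0,1]^d\to\mathbb{R}$; a query at $\mathbf{x}$ returns $Y(\mathbf{x})=y_i(\mathbf{x})+\varepsilon(\mathbf{x})$ with $\varepsilon(\mathbf{x})\sim N(0,\sigma^2)$, $\sigma^2\ge0$, independent of everything else. Admissible algorithm with budget $n$: (i) $\mathbf{x}_1$ deterministic or a measurable function of a random vector $U_1$; (ii) for $t=1,\dots,n-1$, $\mathbf{x}_{t+1}$ a measurable function of $\mathbf{x}_1,Y(\mathbf{x}_1),\dots,\mathbf{x}_t,Y(\mathbf{x}_t)$ and a random vector $U_{t+1}$; (iii) output $\hat{\mathbf{x}}_n^*$ a measurable function of the full history and a random vector $U_n^*$; (iv) $\hat{\mathbf{x}}_n^*\in\{\mathbf{x}_1,\dots,\mathbf{x}_n\}$; the $U$'s are independent random vectors independent of the noise. First hitting time: $\tau(\mathcal Z)=\min\{t\in\{1,\dots,n\}:\mathbf{x}_t\in\mathcal Z\}$ if some $\mathbf{x}_t\in\mathcal Z$, and $\tau(\mathcal Z)=n+1$ otherwise. *)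

(* Defs.v *)
From HB Require Import structures.
From mathcomp Require Import all_boot all_order all_algebra.
From mathcomp Require Import finmap.
From mathcomp Require Import all_classical all_reals.
From mathcomp Require Import ereal topology normedtype sequences measure
  lebesgue_measure lebesgue_integral probability.
From mathcomp Require Import normal_distribution.

Set Implicit Arguments.
Unset Strict Implicit.
Unset Printing Implicit Defensive.

Import Order.TTheory GRing.Theory Num.Theory.
Local Open Scope classical_set_scope.
Local Open Scope ring_scope.

Notation Rpoint R d := (d.-tuple R).

Definition cube {R : realType} (d : nat) : set (Rpoint R d) :=
  [set x | forall i : 'I_d, 0 <= tnth x i <= 1].

(* Law of the noise: N(0, sigma^2), sigma >= 0 the standard deviation;
   the degenerate case sigma = 0 is the Dirac mass at 0. *)
Definition noise_law {R : realType} (sigma : R) : set R -> \bar R :=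
  if sigma == 0 then \d_(0 : R) else normal_prob 0 sigma.

Definition mutually_independent {R : realType} {d0 : measure_display}
  {Om : measurableType d0} (P : probability Om R) {I : choiceType}
  (D : set I) (F : I -> set (set Om)) : Prop :=
  forall J : {fset I}, [set` J] `<=` D ->
  forall A : I -> set Om, (forall i, i \in J -> F i (A i)) ->
  P (\bigcap_(i in [set` J]) A i) = (\prod_(i <- J) P (A i))%E.

Definition gen_sigma {d0 d1 : measure_display} {Om : measurableType d0}
  {T : measurableType d1} (X : Om -> T) : set (set Om) :=
  [set A | exists2 B, measurable B & A = X @^-1` B].

(* Index set of the randomness of an algorithm with budget n:
   inl (Some t) = U_{t+1} (t < n), inl None = U_n^*, inr t = eps_{t+1} (t < n). *)
Definition rand_index := (option nat + nat)%type.

Definition rand_domain (n : nat) : set rand_index :=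
  fun i => match i with
           | inl (Some t) => (t < n)%N
           | inl None => True
           | inr t => (t < n)%N
           end.

Section Run.
Context {R : realType} {d0 : measure_display} {Om : measurableType d0}.
Variables (d : nat) (k : nat -> nat).
(* step t : history of the first t queries (x_1,Y_1,...,x_t,Y_t) and U_{t+1}
   |-> x_{t+1}   (0-based: step t produces the (t+1)-th query). *)
Variable step : forall t : nat, t.-tuple (Rpoint R d * R) -> (k t).-tuple R -> Rpoint R d.
Variable U : forall t : nat, Om -> (k t).-tuple R.
Variable eps : nat -> Om -> R.
Variable y : Rpoint R d -> R.

Fixpoint history (t : nat) : Om -> t.-tuple (Rpoint R d * R) :=
  match t with
  | 0 => fun _ => [tuple]
  | t'.+1 => fun w =>
      let h := history t' w in
      let x := step h (U t' w) in
      rcons_tuple h (x, y x + eps t' w)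
  end.

Definition queries (n : nat) (w : Om) : seq (Rpoint R d) :=
  map fst (history n w).

(* first hitting time tau(Z): least t in {1..n} with x_t in Z, n+1 if none *)
Definition hitting_time (n : nat) (Z : set (Rpoint R d)) (w : Om) : nat :=
  (find (fun x => x \in Z) (queries n w)).+1.
End Run.
Arguments cube {R} d _.

(* Main.v *)
Require Import Defs.
From HB Require Import structures.
From mathcomp Require Import all_boot all_order all_algebra.
From mathcomp Require Import finmap.
From mathcomp Require Import all_classical all_reals.
From mathcomp Require Import ereal topology normedtype sequences measure
  lebesgue_measure lebesgue_integral probability.
From mathcomp Require Import normal_distribution.
Import Order.TTheory GRing.Theory Num.Theory.
Local Open Scope classical_set_scope.
Local Open Scope ring_scope.


Lemma find_take_eq (T : Type) (a : pred T) (s1 s2 : seq T) (k : nat) :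
  (k <= size s1)%N -> take k s1 = take k s2 -> (find a s1 < k)%N ->
  find a s2 = find a s1.
Proof.
move=> hk E hf.
have h1 : has a (take k s1) by rewrite has_take_leq.
by rewrite -(cat_take_drop k s1) -(cat_take_drop k s2) !find_cat -E h1.
Qed.

Section Aux.
Context {R : realType} {d0 : measure_display} {Om : measurableType d0}.
Variables (d : nat) (k : nat -> nat).
Variable step : forall t : nat, t.-tuple (Rpoint R d * R) -> (k t).-tuple R -> Rpoint R d.
Variable U : forall t : nat, Om -> (k t).-tuple R.
Variable eps : nat -> Om -> R.

Lemma hist_take (y : Rpoint R d -> R) m j w :
  take m (history step U eps y (m + j) w) = history step U eps y m w.
Proof.
elim: j => [|j IH]; first by rewrite addn0 take_oversize // size_tuple.
rewrite addnS /= -cats1 takel_cat ?size_tuple ?leq_addr //; exact: IH.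
Qed.

Lemma queries_take (y : Rpoint R d -> R) m n w : (m <= n)%N ->
  take m (queries step U eps y n w) = queries step U eps y m w.
Proof.
move=> hmn; rewrite /queries -map_take -(subnKC hmn) hist_take //.
Qed.

Lemma queries_S (y : Rpoint R d -> R) m w :
  queries step U eps y m.+1 w =
  rcons (queries step U eps y m w) (step m (history step U eps y m w) (U m w)).
Proof. by rewrite /queries /= map_rcons. Qed.

Lemma size_queries (y : Rpoint R d -> R) m w : size (queries step U eps y m w) = m.
Proof. by rewrite /queries size_map size_tuple. Qed.

Lemma hist_agree (y1 y2 : Rpoint R d -> R) (Z : set (Rpoint R d)) n w :
  (forall t h u, (t < n)%N -> cube d (step t h u)) ->
  (forall x, cube d x -> ~ Z x -> y1 x = y2 x) ->
  forall m, (m <= n)%N -> (m <= find (fun x => x \in Z) (queries step U eps y1 n w))%N ->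
  history step U eps y1 m w = history step U eps y2 m w.
Proof.
move=> hcube hy; elim=> [|m IH] hmn hmp; first by apply/val_inj.
have E := IH (ltnW hmn) (ltnW hmp).
set x := step m (history step U eps y1 m w) (U m w).
have hx : nth x (queries step U eps y1 n w) m = x.
  by rewrite -(nth_take x (ltnSn m)) queries_take // queries_S nth_rcons size_queries ltnn eqxx.
have nZ : ~ Z x.
  move=> zx; have := before_find x hmp; rewrite hx /=.
  by have -> : (x \in Z) = true by apply: mem_set.
have exy : y1 x = y2 x by apply: hy => //; apply: hcube.
apply/val_inj => /=; rewrite -/x -E -/x exy //.
Qed.
End Aux.

Theorem lemma2 (R : realType) (d0 : measure_display) (Om : measurableType d0)
  (P : probability Om R)
  (d n : nat) (sigma : R) (y1 y2 : Rpoint R d -> R)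
  (Z : set (Rpoint R d))
  (* randomness: U_{t+1} = U t, U_n^* = Ustar, eps_{t+1} = eps t *)
  (k : nat -> nat) (U : forall t : nat, Om -> (k t).-tuple R)
  (kstar : nat) (Ustar : Om -> kstar.-tuple R) (eps : nat -> Om -> R)
  (* the algorithm: query maps and output map *)
  (step : forall t : nat, t.-tuple (Rpoint R d * R) -> (k t).-tuple R -> Rpoint R d)
  (output : n.-tuple (Rpoint R d * R) -> kstar.-tuple R -> Rpoint R d) :
  (* noise model *)
  0 <= sigma ->
  (forall t, (t < n)%N -> measurable_fun setT (eps t)) ->
  (forall t, (t < n)%N -> forall B : set R, measurable B ->
     P (eps t @^-1` B) = noise_law sigma B) ->
  (* random vectors *)
  (forall t, (t < n)%N -> measurable_fun setT (U t)) ->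
  measurable_fun setT Ustar ->
  (* the U's and the noise variables are mutually independent *)
  mutually_independent P (rand_domain n)
    (fun i => match i with
              | inl (Some t) => gen_sigma (U t)
              | inl None => gen_sigma Ustar
              | inr t => gen_sigma (eps t)
              end) ->
  (* admissibility: measurable query maps with values in [0,1]^d *)
  (forall t, (t < n)%N ->
     measurable_fun setT
       (fun p : t.-tuple (Rpoint R d * R) * (k t).-tuple R => step t p.1 p.2)) ->
  (forall t h u, (t < n)%N -> cube d (step t h u)) ->
  (* admissibility: measurable output map, output is one of the queries *)
  measurable_fun setT
    (fun p : n.-tuple (Rpoint R d * R) * kstar.-tuple R => output p.1 p.2) ->
  (forall w, output (history step U eps y1 n w) (Ustar w)
               \in queries step U eps y1 n w) ->
  (forall w, output (history step U eps y2 n w) (Ustar w)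
               \in queries step U eps y2 n w) ->
  (* the two problems agree outside Z *)
  Z `<=` cube d ->
  (forall x, cube d x -> ~ Z x -> y1 x = y2 x) ->
  forall t : int,
    P [set w | t < (hitting_time step U eps y2 n Z w)%:Z]
    = P [set w | t < (hitting_time step U eps y1 n Z w)%:Z].
Proof.
move=> _ _ _ _ _ _ _ hcube _ _ _ _ hy t.
set a := (fun x => x \in Z).
suff E : forall w, hitting_time step U eps y2 n Z w = hitting_time step U eps y1 n Z w.
  by congr (P _); apply/funext => w /=; rewrite E.
move=> w; rewrite /hitting_time; congr S.
set p := find _ (queries step U eps y1 n w).
have hp : (p <= n)%N by rewrite /p -{2}(size_queries _ _ step U eps y1 n w) find_size.
case: (ltnP p n) => hpn.
  have Eh := hist_agree _ _ _ _ _ _ _ _ _ _ hcube hy p (ltnW hpn) (leqnn p).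
  apply: (@find_take_eq _ _ _ _ p.+1).
  - by rewrite size_queries.
  -     rewrite queries_take //.
    rewrite queries_take //.
    by rewrite !queries_S /queries Eh.
  - exact: ltnSn.
have Eh := hist_agree _ _ _ _ _ _ _ _ _ _ hcube hy n (leqnn n) hpn.
by rewrite /p /queries Eh.
Qed.
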